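(* Let $A^\star\in\mathbb{R}^{n\times n}$, $B^\star\in\mathbb{R}^{n\times m}$, $C^\star\in\mathbb{R}^{p\times n}$ with $(A^\star,C^\star)$ observable with observability index $\ell^\star$, let data be generated as in the context and assume $\Delta_{10}\Delta_{10}^\top\preceq\Theta$. If $\sigma_{\min}(S_0S_0^\top)/\sigma_{\max}(\Theta_{22})>4$, then $\Psi_0\Psi_0^\top\succ\Theta_{22}$.
   Context: $\sigma_{\min},\sigma_{\max}$ denote smallest and largest singular values. Let $\ell=\ell^\star$. Data: for $k=0,\dots,T$ ($T\ge\ell$), $x(k+1)=A^\star x(k)+B^\star u(k)$, $y(k)=C^\star x(k)$ from some $x(0)$; $u^{\mathrm m}=u+d^u$, $y^{\mathrm m}=y+d^y$. Matrices with columns $j=0,\dots,T-\ell$: column $j$ of $\Psi_0$ is $(y^{\mathrm m}(j),\dots,y^{\mathrm m}(j+\ell-1),u^{\mathrm m}(j),\dots,u^{\mathrm m}(j+\ell-1))$; of $S_0$ is $(y(j),\dots,y(j+\ell-1),u(j),\dots,u(j+\ell-1))$; of $\Delta_{10}$ is $(d^y(j+\ell),d^y(j),\dots,d^y(j+\ell-1),d^u(j),\dots,d^u(j+\ell-1))$. $\Theta=\Theta^\top\succeq0$ of size $p+p\ell+m\ell$ is given, partitioned as $\begin{bmatrix}\Theta_{11}&\Theta_{12}\\\Theta_{12}^\top&\Theta_{22}\end{bmatrix}$ with $\Theta_{11}\in\mathbb{R}^{p\times p}$. *)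

(* Defs.v *)
From HB Require Import structures.
From mathcomp Require Import all_boot all_order all_algebra.
From mathcomp Require Import classical_sets reals.
Set Implicit Arguments. Unset Strict Implicit. Unset Printing Implicit Defensive.
Import Order.TTheory GRing.Theory Num.Theory.
Local Open Scope ring_scope.
Local Open Scope classical_set_scope.

Section Defs.
Variable R : realType.

(* entry r of a column vector, 0 if out of range *)
Definition vnth q (v : 'cV[R]_q) (r : nat) : R :=
  match insub r with Some i => v i 0 | None => 0 end.

Definition mnth q n (M : 'M[R]_(q, n)) (r : nat) (c : 'I_n) : R :=
  match insub r with Some i => M i c | None => 0 end.

(* stacked column (f j; f (j+1); ...; f (j+l-1)) *)
Definition stackc q (f : nat -> 'cV[R]_q) (l j : nat) : 'cV[R]_(l * q) :=
  \col_(i < l * q) vnth (f (j + (i %/ q)%N)) (i %% q)%N.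

(* observability matrix [C; CA; ...; CA^(l-1)] *)
Definition obs_mx n p (A : 'M[R]_n) (C : 'M[R]_(p, n)) (l : nat) : 'M[R]_(l * p, n) :=
  \matrix_(i < l * p, c < n) mnth (C *m A ^+ (i %/ p)%N) (i %% p)%N c.

Definition obs_index n p (A : 'M[R]_n) (C : 'M[R]_(p, n)) (l : nat) : Prop :=
  \rank (obs_mx A C l) = n /\ forall k, (k < l)%N -> (\rank (obs_mx A C k) < n)%N.

(* Hankel-type data matrix with columns j = 0..T-l: (f j..f(j+l-1), g j..g(j+l-1)) *)
Definition hankel2 p m (f : nat -> 'cV[R]_p) (g : nat -> 'cV[R]_m) (l T : nat)
  : 'M[R]_(l * p + l * m, (T - l).+1) :=
  \matrix_(i, j) (col_mx (stackc f l j) (stackc g l j)) i 0.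

(* Delta_10: columns (dy(j+l), dy j..dy(j+l-1), du j..du(j+l-1)) *)
Definition delta10 p m (dy : nat -> 'cV[R]_p) (du : nat -> 'cV[R]_m) (l T : nat)
  : 'M[R]_(p + (l * p + l * m), (T - l).+1) :=
  \matrix_(i, j)
    (col_mx (dy (j + l)%N) (col_mx (stackc dy l j) (stackc du l j))) i 0.

Definition psd q (M : 'M[R]_q) : Prop := forall x : 'cV[R]_q, 0 <= (x^T *m M *m x) 0 0.
Definition pd q (M : 'M[R]_q) : Prop :=
  forall x : 'cV[R]_q, x != 0 -> 0 < (x^T *m M *m x) 0 0.
Definition loewner_le q (M N : 'M[R]_q) : Prop := psd (N - M).
Definition loewner_lt q (M N : 'M[R]_q) : Prop := pd (N - M).

Definition sigma_max q (M : 'M[R]_q) : R :=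
  Num.sqrt (sup [set a : R | eigenvalue (M^T *m M) a]).
Definition sigma_min q (M : 'M[R]_q) : R :=
  Num.sqrt (inf [set a : R | eigenvalue (M^T *m M) a]).

End Defs.

(* Main.v *)
Require Import Defs.
From HB Require Import structures.
From mathcomp Require Import all_boot all_order all_algebra.
From mathcomp Require Import classical_sets reals.
From mathcomp Require Import sesquilinear spectral complex.
From mathcomp Require Import lra.
Set Implicit Arguments. Unset Strict Implicit. Unset Printing Implicit Defensive.
Import Order.TTheory GRing.Theory Num.Theory.
Local Open Scope ring_scope.
Local Open Scope sesquilinear_scope.

Section Spec.
Variable R : realType.
Local Notation C := (R[i]).
Local Notation f := (real_complex R).

Lemma conj_f (r : R) : (f r)^* = f r.
Proof. apply: conj_Creal; apply/complex_realP; by exists r. Qed.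

Lemma spec_decomp q (A : 'M[R]_q) : A^T = A ->
  exists d : 'I_q -> R, (forall i, eigenvalue A (d i)) /\
  forall v : 'cV[R]_q, exists w : 'I_q -> R, (forall i, 0 <= w i) /\
    \sum_i w i = (v^T *m v) 0 0 /\ (v^T *m A *m v) 0 0 = \sum_i d i * w i.
Proof.
move=> Asym.
pose Ac := map_mx f A.
have Aher : Ac \is hermsymmx.
  apply/is_hermitianmxP; rewrite expr0 scale1r.
  have Aij i j : A j i = A i j by rewrite -[in RHS]Asym mxE.
  by apply/matrixP => i j; rewrite !mxE conj_f Aij.
have /hermitian_normalmx /orthomx_spectralP Aeq := Aher.
have Pu := spectral_unitarymx Ac.
set P := spectralmx Ac in Aeq Pu.
set s := spectral_diag Ac in Aeq.
have sreal : s \is a realmx by apply: hermitian_spectral_diag_real.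
exists (fun i => complex.Re (s 0 i)).
have sR i : f (complex.Re (s 0 i)) = s 0 i.
  by apply: RRe_real; apply: (mxOverP sreal).
have Pinv : invmx P = P^t* by apply: invmx_unitary.
have PP' : P *m P^t* = 1%:M by apply/unitarymxP.
have P'P : P^t* *m P = 1%:M by apply: mulmx1C.
rewrite Pinv in Aeq.
split.
  move=> i; rewrite eigenvalue_root_char -(fmorph_root f) map_char_poly -/Ac.
  suff H : root (char_poly Ac) (s 0 i) by rewrite -(sR i) in H; exact: H.
  rewrite -eigenvalue_root_char; apply/eigenvalueP; exists (row i P).
    rewrite -row_mul Aeq !mulmxA PP' mul1mx mul_diag_mx.
    by apply/rowP => j; rewrite !mxE.
  apply/eqP => Pi0.
  have := congr1 (fun M : 'rV[C]_q => M 0 i) (row_mul i P (P^t*)).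
  rewrite PP' Pi0 mul0mx row1 !mxE /= => /eqP; by rewrite eqxx oner_eq0.
move=> v.
pose vc := map_mx f v.
pose z := P *m vc.
have vcR : map_mx Num.conj vc = vc by apply/matrixP => i j; rewrite !mxE conj_f.
have zt : vc^T *m P^t* = z^t*.
  rewrite /z trmx_mul map_mxM map_trmx; congr (_ *m _).
  by apply/matrixP => i j; rewrite !mxE; exact/esym/conj_f.
have vct : vc^T = z^t* *m P by rewrite -zt -mulmxA P'P mulmx1.
have zz i : f (complex.Re (z i 0 * (z i 0)^*)) = z i 0 * (z i 0)^*.
  by apply: RRe_real; apply: ger0_real; apply: mul_conjC_ge0.
exists (fun i => complex.Re (z i 0 * (z i 0)^*)).
split.
  move=> i; rewrite -ler0c. rewrite zz. exact: mul_conjC_ge0.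
split; apply: complexI; rewrite rmorph_sum.
  have -> : f ((v^T *m v) 0 0) = (vc^T *m vc) 0 0.
    by rewrite /vc map_trmx -map_mxM [in RHS]mxE.
  rewrite vct -mulmxA -/z mxE; apply: eq_bigr => i _.
  by apply: etrans (zz i) _; rewrite !mxE mulrC.
have -> : f ((v^T *m A *m v) 0 0) = (vc^T *m Ac *m vc) 0 0.
  by rewrite /vc map_trmx -!map_mxM [in RHS]mxE.
rewrite Aeq !mulmxA zt -!mulmxA -/z mulmxA mxE; apply: eq_bigr => i _.
rewrite rmorphM; transitivity (s 0 i * (z i 0 * (z i 0)^*)); last first.
  by congr (_ * _); [exact/esym/sR | exact/esym/zz].
rewrite mul_mx_diag !mxE; set c := \sum_j _.
by rewrite [c^* * _]mulrC -mulrA [c^* * c]mulrC.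
Qed.

Lemma vtv_gt0 q (v : 'cV[R]_q) : v != 0 -> 0 < (v^T *m v) 0 0.
Proof.
move=> vn0; rewrite mxE lt_def; apply/andP; split; last first.
  by apply: sumr_ge0 => i _; rewrite mxE -expr2 sqr_ge0.
apply: contra vn0 => /eqP /psumr_eq0P H.
have {}H := H (fun k _ => ltac:(by rewrite mxE -expr2 sqr_ge0)).
apply/eqP/matrixP => i j; rewrite (ord1 j) mxE.
by have /(_ isT) /eqP := H i; rewrite mxE mulf_eq0 orbb => /eqP.
Qed.

Lemma eig_col q (A : 'M[R]_q) a : A^T = A -> eigenvalue A a ->
  exists v : 'cV_q, v != 0 /\ A *m v = a *: v.
Proof.
move=> As /eigenvalueP [u uA un0]; exists u^T; split.
  by apply: contra un0 => /eqP /(congr1 trmx); rewrite trmxK trmx0 => ->.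
by rewrite -{1}As -trmx_mul uA linearZ.
Qed.

Lemma quad_eig q (A : 'M[R]_q) a (v : 'cV_q) : A *m v = a *: v ->
  (v^T *m A *m v) 0 0 = a * (v^T *m v) 0 0.
Proof. by move=> H; rewrite -mulmxA H -scalemxAr mxE. Qed.

Lemma eig_ub q (A : 'M[R]_q) : A^T = A ->
  exists K, forall a, eigenvalue A a -> a <= K.
Proof.
move=> As; have [d [_ Hd]] := spec_decomp As.
exists (\sum_j `|d j|) => a /(eig_col As) [v [vn0 Av]].
have V0 := vtv_gt0 vn0.
have [w [w0 [ws wq]]] := Hd v.
have := quad_eig Av; rewrite wq -ws => E.
rewrite -(ler_pM2r V0) -ws -E mulr_sumr.
apply: ler_sum => i _; apply: ler_wpM2r => //.
apply: le_trans (real_ler_norm _) _; first exact: num_real.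
by rewrite (bigD1 i) //= lerDl sumr_ge0.
Qed.

Lemma symTT q (Q : 'M[R]_q) : (Q^T *m Q)^T = Q^T *m Q.
Proof. by rewrite trmx_mul trmxK. Qed.

Lemma sigma_max_ge q (Q : 'M[R]_q) d : Q^T = Q -> eigenvalue Q d -> d <= sigma_max Q.
Proof.
move=> Qs Qd.
have d2 : eigenvalue (Q^T *m Q) (d ^+ 2).
  move: Qd => /eigenvalueP [u uQ un0]; apply/eigenvalueP; exists u => //.
  by rewrite Qs mulmxA uQ -scalemxAl uQ scalerA expr2.
have [K HK] := eig_ub (symTT Q).
have hs : has_ubound [set a : R | eigenvalue (Q^T *m Q) a].
  by exists K => a /HK.
have := ub_le_sup hs d2 => le2.
rewrite /sigma_max; apply: le_trans (real_ler_norm _) _; first exact: num_real.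
by rewrite -sqrtr_sqr ler_sqrt // (le_trans _ le2) // sqr_ge0.
Qed.

Lemma sigma_min_le q (M : 'M[R]_q) e : M^T = M -> psd M -> eigenvalue M e ->
  sigma_min M <= e.
Proof.
move=> Ms Mp Me.
have e0 : 0 <= e.
  have [v [vn0 Mv]] := eig_col Ms Me.
  have := Mp v; rewrite (quad_eig Mv) pmulr_lge0 //; exact: vtv_gt0.
have d2 : eigenvalue (M^T *m M) (e ^+ 2).
  move: Me => /eigenvalueP [u uM un0]; apply/eigenvalueP; exists u => //.
  by rewrite Ms mulmxA uM -scalemxAl uM scalerA expr2.
have hl : has_lbound [set a : R | eigenvalue (M^T *m M) a].
  exists 0 => a /(eig_col (symTT M)) [v [vn0 Mv]].
  have := quad_eig Mv => E.
  have E' : v^T *m (M^T *m M) *m v = (M *m v)^T *m (M *m v).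
    by rewrite trmx_mul !mulmxA.
  have : 0 <= ((M *m v)^T *m (M *m v)) 0 0.
    by rewrite mxE; apply: sumr_ge0 => i _; rewrite mxE -expr2 sqr_ge0.
  rewrite -E' E pmulr_lge0 //; exact: vtv_gt0.
have := ge_inf hl d2 => le2.
rewrite /sigma_min -(ger0_norm e0) -sqrtr_sqr ler_sqrt ?sqr_ge0 //.
Qed.


Lemma quad_le q (A : 'M[R]_q) t : A^T = A -> (forall a, eigenvalue A a -> a <= t) ->
  forall v : 'cV_q, (v^T *m A *m v) 0 0 <= t * (v^T *m v) 0 0.
Proof.
move=> As Ht v; have [d [Hd H]] := spec_decomp As.
have [w [w0 [ws wq]]] := H v.
rewrite wq -ws mulr_sumr; apply: ler_sum => i _; apply: ler_wpM2r => //; exact: Ht.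
Qed.

Lemma quad_ge q (A : 'M[R]_q) t : A^T = A -> (forall a, eigenvalue A a -> t <= a) ->
  forall v : 'cV_q, t * (v^T *m v) 0 0 <= (v^T *m A *m v) 0 0.
Proof.
move=> As Ht v; have [d [Hd H]] := spec_decomp As.
have [w [w0 [ws wq]]] := H v.
rewrite wq -ws mulr_sumr; apply: ler_sum => i _; apply: ler_wpM2r => //; exact: Ht.
Qed.

Lemma quad_dr p q (M : 'M[R]_(p + q)) (v : 'cV_q) :
  ((col_mx 0 v)^T *m M *m col_mx 0 v) 0 0 = (v^T *m drsubmx M *m v) 0 0.
Proof.
by rewrite -{1}[M]submxK tr_col_mx trmx0 mul_row_block !mul0mx !add0r mul_row_col mulmx0 add0r.
Qed.

Lemma drsubmxB p q (A B : 'M[R]_(p + q)) : drsubmx (A - B) = drsubmx A - drsubmx B.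
Proof. by apply/matrixP => i j; rewrite !mxE. Qed.

Lemma drsubmx_mulT p q n (D : 'M[R]_(p + q, n)) :
  drsubmx (D *m D^T) = dsubmx D *m (dsubmx D)^T.
Proof. by rewrite -{1 2}[D]vsubmxK tr_col_mx mul_col_row block_mxKdr. Qed.

Definition dot q (x y : 'cV[R]_q) := (x^T *m y) 0 0.

Lemma dotDl q (x y z : 'cV[R]_q) : dot (x + y) z = dot x z + dot y z.
Proof. by rewrite /dot linearD /= mulmxDl mxE. Qed.
Lemma dotDr q (x y z : 'cV[R]_q) : dot z (x + y) = dot z x + dot z y.
Proof. by rewrite /dot mulmxDr mxE. Qed.
Lemma dotC q (x y : 'cV[R]_q) : dot x y = dot y x.
Proof.
rewrite /dot; have -> : y^T *m x = (x^T *m y)^T by rewrite trmx_mul trmxK.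
by rewrite [RHS]mxE.
Qed.
Lemma dot_ge0 q (x : 'cV[R]_q) : 0 <= dot x x.
Proof. by rewrite /dot mxE; apply: sumr_ge0 => i _; rewrite mxE -expr2 sqr_ge0. Qed.
Lemma dot_quad q n (S : 'M[R]_(q, n)) v : dot (S^T *m v) (S^T *m v) = (v^T *m (S *m S^T) *m v) 0 0.
Proof. by rewrite /dot trmx_mul trmxK !mulmxA. Qed.


Lemma stackcD q (f g : nat -> 'cV[R]_q) l j :
  stackc (fun k => f k + g k) l j = stackc f l j + stackc g l j.
Proof.
apply/matrixP => i k; rewrite !mxE /vnth.
by case: insub => [x|]; rewrite ?mxE ?addr0.
Qed.

End Spec.

Close Scope sesquilinear_scope.
Unset Implicit Arguments.

Theorem lemma10 (R : realType) (n m p : nat)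
  (As : 'M[R]_n) (Bs : 'M[R]_(n, m)) (Cs : 'M[R]_(p, n)) (l T : nat)
  (x : nat -> 'cV[R]_n) (u : nat -> 'cV[R]_m)
  (du : nat -> 'cV[R]_m) (dy : nat -> 'cV[R]_p)
  (Theta : 'M[R]_(p + (l * p + l * m))) :
  obs_index As Cs l ->
  (l <= T)%N ->
  (forall k, (k <= T)%N -> x k.+1 = As *m x k + Bs *m u k) ->
  Theta^T = Theta -> psd Theta ->
  let y := fun k => Cs *m x k in
  let ym := fun k => y k + dy k in
  let um := fun k => u k + du k in
  let Psi0 := hankel2 ym um l T in
  let S0 := hankel2 y u l T in
  let D10 := delta10 dy du l T in
  let Theta22 := drsubmx Theta in
  loewner_le (D10 *m D10^T) Theta ->
  sigma_min (S0 *m S0^T) / sigma_max Theta22 > 4 ->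
  loewner_lt Theta22 (Psi0 *m Psi0^T).
Proof.
move=> _ _ _ Ts Tp y ym um Psi0 S0 D10 Theta22 HD Hsig.
set D0 := dsubmx D10.
have hPsi : Psi0 = S0 + D0.
  apply/matrixP => i j.
  rewrite /Psi0 /hankel2 [LHS]mxE /ym /um !stackcD -add_col_mx [LHS]mxE.
  rewrite [RHS]mxE /S0 /hankel2 [X in _ = X + _]mxE; congr (_ + _).
  by rewrite /D0 /D10 /delta10 [RHS]mxE [RHS]mxE col_mxEd.
have T22s : Theta22^T = Theta22 by rewrite /Theta22 trmx_drsub Ts.
have T22p : psd Theta22.
  by move=> v; rewrite -quad_dr; apply: Tp.
have HD0 (v : 'cV_(l * p + l * m)) : (v^T *m (D0 *m D0^T) *m v) 0 0 <= (v^T *m Theta22 *m v) 0 0.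
  have := HD (col_mx 0 v); rewrite quad_dr drsubmxB drsubmx_mulT -/D0.
  by rewrite mulmxBr mulmxBl mxE [X in _ + X]mxE subr_ge0.
pose M := S0 *m S0^T.
have Ms : M^T = M by rewrite /M trmx_mul trmxK.
have Mp : psd M by move=> v; rewrite -dot_quad dot_ge0.
set s := sigma_min M.
set t := sigma_max Theta22.
have t0 : 0 <= t by rewrite /t /sigma_max sqrtr_ge0.
have tpos : 0 < t.
  rewrite lt_def t0 andbT; apply/negP => /eqP t00.
  by move: Hsig; rewrite -/M -/s -/t t00 invr0 mulr0; lra.
have st : 4 * t < s by rewrite -ltr_pdivlMr // (mulrC 4) -ltr_pdivlMr.
have Sge (v : 'cV_(l * p + l * m)) : s * (v^T *m v) 0 0 <= (v^T *m M *m v) 0 0.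
  exact: (quad_ge Ms (fun a Ha => sigma_min_le Ms Mp Ha) v).
have Tle (v : 'cV_(l * p + l * m)) : (v^T *m Theta22 *m v) 0 0 <= t * (v^T *m v) 0 0.
  exact: (quad_le T22s (fun a Ha => sigma_max_ge T22s Ha) v).
rewrite /loewner_lt /pd => v vn0.
rewrite mulmxBr mulmxBl mxE [X in _ + X]mxE subr_gt0.
have V0 := vtv_gt0 vn0.
set a := S0^T *m v; set b := D0^T *m v.
have E1 : (v^T *m (Psi0 *m Psi0^T) *m v) 0 0 = dot (a + b) (a + b).
  by rewrite -dot_quad hPsi linearD /= mulmxDl.
have EA : dot a a = (v^T *m M *m v) 0 0 by rewrite dot_quad.
have EB : dot b b = (v^T *m (D0 *m D0^T) *m v) 0 0 by rewrite dot_quad.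
have E2 : dot (a + b) (a + b) = dot a a + 2 * dot a b + dot b b.
  by rewrite dotDl !dotDr (dotC b a); lra.
have E3 : dot (a + b + b) (a + b + b) = dot a a + 4 * dot a b + 4 * dot b b.
  by rewrite !dotDl !dotDr ?dotDl ?dotDr (dotC b a); lra.
have P3 := dot_ge0 (a + b + b).
have P : 0 < (s - 4 * t) * (v^T *m v) 0 0 by apply: mulr_gt0 => //; rewrite subr_gt0.
have := Sge v; have := Tle v; have := HD0 v.
rewrite E1 -EA -EB E2 => h1 h2 h3.
rewrite E3 in P3.
nra.
Qed.
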